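(* Let $\psi_A\in(0,2\pi)\setminus\{\pi\}$, $\eta\neq0$, $\phi\in(0,\pi)$, and put $A=\tan\frac{\psi_A}{2}$, $h=\frac{\sinh\eta}{\sin\phi}$, $z=\eta+i\phi$. Let $$Q_{A_1}=\begin{pmatrix}\cos\frac{\psi_A}{2}-i\cosh z\,\sin\frac{\psi_A}{2}&i\sinh z\,\sin\frac{\psi_A}{2}\\-i\sinh z\,\sin\frac{\psi_A}{2}&\cos\frac{\psi_A}{2}+i\cosh z\,\sin\frac{\psi_A}{2}\end{pmatrix}.$$ Let $a,b,c,\mu,\chi\in\mathbb{R}$ with $c\neq0$, set $$M=\begin{pmatrix}a+ib&e^{-\mu}c\,e^{i\chi}\\-e^{\mu}c\,e^{-i\chi}&a-ib\end{pmatrix},\qquad P=Q_{A_1}^{-1}M,$$ and suppose $\overline{P_{11}}=P_{22}$. Then, with $m=\tanh\mu$ and provided $\overline{P_{21}}\neq0$ and $(A-h)m-h(hA+1)\neq0$, $$-\frac{P_{12}}{\overline{P_{21}}}=\frac{(A+h)m+h(hA-1)}{(A-h)m-h(hA+1)},$$ which in particular is independent of $a,b,c,\chi$. Equivalently, if this ratio equals $e^{2\mu'}$ with $\mu'\in\mathbb{R}$ and $m'=\tanh\mu'$, then $$mm'-\frac{h}{A}(m+m')-h^2=0.$$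
   Context: Matrices are $\mathrm{SL}(2,\mathbb{C})$ (or $\mathrm{GL}(2,\mathbb{C})$) representatives of Lorentz transformations; $P_{ij}$ denotes the $(i,j)$ entry and the bar denotes complex conjugation. Interpretation: $Q_{A_1}$ is the holonomy of an external semi-infinite defect (deficit angle $\psi_A$, at angle $\phi$ and relative rapidity $\eta$ to a stationary defect $B$ along the $z$-axis); $M$ is the holonomy of an intermediate defect ending on a junction moving with rapidity $\mu$ along the stationary defect $B_1$; the condition $\overline{P_{11}}=P_{22}$ expresses that the next intermediate defect ends on a subluminal junction on $B_2$, whose rapidity $\mu'$ is defined by $e^{2\mu'}=-P_{12}/\overline{P_{21}}$. *)

(* Defs.v *)
From Stdlib Require Export Reals.
Open Scope R_scope.

Record C := mkC { Re : R; Im : R }.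

Definition RtoC (x : R) : C := mkC x 0.
Definition Ci : C := mkC 0 1.
Definition Cadd (z w : C) : C := mkC (Re z + Re w) (Im z + Im w).
Definition Copp (z : C) : C := mkC (- Re z) (- Im z).
Definition Csub (z w : C) : C := Cadd z (Copp w).
Definition Cmul (z w : C) : C :=
  mkC (Re z * Re w - Im z * Im w) (Re z * Im w + Im z * Re w).
Definition Cconj (z : C) : C := mkC (Re z) (- Im z).
Definition Cinv (z : C) : C :=
  mkC (Re z / (Re z ^ 2 + Im z ^ 2)) (- Im z / (Re z ^ 2 + Im z ^ 2)).
Definition Cdiv (z w : C) : C := Cmul z (Cinv w).
Definition Cexp (z : C) : C := mkC (exp (Re z) * cos (Im z)) (exp (Re z) * sin (Im z)).
Definition Ccosh (z : C) : C :=
  Cmul (RtoC (1/2)) (Cadd (Cexp z) (Cexp (Copp z))).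
Definition Csinh (z : C) : C :=
  Cmul (RtoC (1/2)) (Csub (Cexp z) (Cexp (Copp z))).

Record M2 := mkM2 { e11 : C; e12 : C; e21 : C; e22 : C }.
Definition M2mul (X Y : M2) : M2 :=
  mkM2 (Cadd (Cmul (e11 X) (e11 Y)) (Cmul (e12 X) (e21 Y)))
       (Cadd (Cmul (e11 X) (e12 Y)) (Cmul (e12 X) (e22 Y)))
       (Cadd (Cmul (e21 X) (e11 Y)) (Cmul (e22 X) (e21 Y)))
       (Cadd (Cmul (e21 X) (e12 Y)) (Cmul (e22 X) (e22 Y))).
Definition M2det (X : M2) : C := Csub (Cmul (e11 X) (e22 X)) (Cmul (e12 X) (e21 X)).
Definition M2inv (X : M2) : M2 :=
  let d := Cinv (M2det X) in
  mkM2 (Cmul d (e22 X)) (Cmul d (Copp (e12 X)))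
       (Cmul d (Copp (e21 X))) (Cmul d (e11 X)).

Definition QA1 (psiA eta phi : R) : M2 :=
  let z := mkC eta phi in
  let co := RtoC (cos (psiA / 2)) in
  let s := RtoC (sin (psiA / 2)) in
  mkM2 (Csub co (Cmul Ci (Cmul (Ccosh z) s)))
       (Cmul Ci (Cmul (Csinh z) s))
       (Copp (Cmul Ci (Cmul (Csinh z) s)))
       (Cadd co (Cmul Ci (Cmul (Ccosh z) s))).

Definition Mint (a b c mu chi : R) : M2 :=
  mkM2 (mkC a b)
       (Cmul (RtoC (exp (- mu) * c)) (Cexp (mkC 0 chi)))
       (Copp (Cmul (RtoC (exp mu * c)) (Cexp (mkC 0 (- chi)))))
       (mkC a (- b)).

(* Main.v *)
Require Import Defs.
From Stdlib Require Import Reals.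
From Stdlib Require Import Lra.
Open Scope R_scope.




Definition Qi (cs sn ch sh cf sf : R) : M2 :=
  mkM2 (mkC (cs - sh*sf*sn) (ch*cf*sn)) (mkC (ch*sf*sn) (-(sh*cf*sn)))
       (mkC (-(ch*sf*sn)) (sh*cf*sn)) (mkC (cs + sh*sf*sn) (-(ch*cf*sn))).
Definition Mi (a b c em ck sk : R) : M2 :=
  mkM2 (mkC a b) (mkC (/em*c*ck) (/em*c*sk)) (mkC (-(em*c*ck)) (em*c*sk)) (mkC a (-b)).

Lemma core (cs sn ch sh cf sf a b c em ck sk : R) :
  sn <> 0 -> sh <> 0 -> sf <> 0 -> em <> 0 -> cs <> 0 ->
  cf^2 + sf^2 = 1 -> ch^2 - sh^2 = 1 -> (em + /em)/2 <> 0 ->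
  let P := M2mul (Qi cs sn ch sh cf sf) (Mi a b c em ck sk) in
  Cconj (e11 P) = e22 P ->
  let cm := (em + /em)/2 in let sm := (em - /em)/2 in
  let A := sn/cs in let h := sh/sf in let m := sm/cm in
  let K := cs*sf*cm/sh in
  let N := (A + h) * m + h * (h * A - 1) in
  let D := (A - h) * m - h * (h * A + 1) in
  Re (e12 P) = - K * N * (c*ck) /\ Im (e12 P) = - K * N * (c*sk) /\
  Re (Cconj (e21 P)) = K * D * (c*ck) /\ Im (Cconj (e21 P)) = K * D * (c*sk).
Proof.
  intros Hsn Hsh Hsf Hem Hcs Hf Hh Hcm P H cm sm A h m K N D.
  assert (H1 := f_equal Re H). assert (H2 := f_equal Im H).
  unfold P, Qi, Mi, M2mul, Cconj, Cmul, Cadd in H1, H2; cbn [Re Im e11 e12 e21 e22] in H1, H2.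
  assert (Ha : a = (-(c*ck)*ch*sf*sm + (c*sk)*sh*cf*cm)/(sh*sf)).
  { match type of H1 with ?L = ?R =>
      assert (E : a*(sh*sf) + (c*ck)*ch*sf*sm - (c*sk)*sh*cf*cm = -/(2*sn)*(L-R))
        by (unfold sm, cm; field; auto) end.
    rewrite H1, Rminus_diag, Rmult_0_r in E. field_simplify_eq; [|auto]. lra. }
  assert (Hb : b = ((c*ck)*sh*cf*cm + (c*sk)*ch*sf*sm)/(sh*sf)).
  { match type of H2 with ?L = ?R =>
      assert (E : b*(sh*sf) - ((c*ck)*sh*cf*cm + (c*sk)*ch*sf*sm) = /(2*sn)*(L-R))
        by (unfold sm, cm; field; auto) end.
    rewrite H2, Rminus_diag, Rmult_0_r in E. field_simplify_eq; [|auto]. lra. }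
  set (Xr := cs*(/em) - sn*sh*sf*(/em) - sn*(sh^2*cf^2*cm + ch^2*sf^2*sm)/(sh*sf)).
  set (Yr := -cs*em - sn*sh*sf*em - sn*(sh^2*cf^2*cm - ch^2*sf^2*sm)/(sh*sf)).
  assert (HX : Xr = - K * N).
  { unfold Xr, K, N, A, h, m. replace (cf^2) with (1 - sf^2) by lra.
    replace (ch^2) with (1 + sh^2) by lra. unfold sm, cm in *. field. repeat split; auto; nra. }
  assert (HY : Yr = K * D).
  { unfold Yr, K, D, A, h, m. replace (cf^2) with (1 - sf^2) by lra.
    replace (ch^2) with (1 + sh^2) by lra. unfold sm, cm in *. field. repeat split; auto; nra. }
  rewrite <- HX, <- HY.
  unfold P, Qi, Mi, M2mul, Cconj, Cmul, Cadd; cbn [Re Im e11 e12 e21 e22].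
  rewrite Ha, Hb. unfold Xr, Yr, sm, cm.
  repeat split; field; auto.
Qed.

Lemma Ccosh_eq x y : Ccosh (mkC x y) = mkC (cosh x * cos y) (sinh x * sin y).
Proof. unfold Ccosh, Cexp, Cmul, Cadd, Copp, RtoC; cbn.
  rewrite cos_neg, sin_neg. unfold cosh, sinh. f_equal; field. Qed.
Lemma Csinh_eq x y : Csinh (mkC x y) = mkC (sinh x * cos y) (cosh x * sin y).
Proof. unfold Csinh, Csub, Cexp, Cmul, Cadd, Copp, RtoC; cbn.
  rewrite cos_neg, sin_neg. unfold cosh, sinh. f_equal; field. Qed.

Lemma QA1_eq psiA eta phi :
  let cs := cos (psiA/2) in let sn := sin (psiA/2) in
  let ch := cosh eta in let sh := sinh eta in let cf := cos phi in let sf := sin phi in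
  QA1 psiA eta phi = mkM2 (mkC (cs + sh*sf*sn) (-(ch*cf*sn))) (mkC (-(ch*sf*sn)) (sh*cf*sn))
                          (mkC (ch*sf*sn) (-(sh*cf*sn))) (mkC (cs - sh*sf*sn) (ch*cf*sn)).
Proof. intros. unfold QA1. rewrite Ccosh_eq, Csinh_eq.
  unfold Csub, Cadd, Copp, Cmul, Ci, RtoC; cbn. unfold cs, sn, ch, sh, cf, sf.
  f_equal; f_equal; ring. Qed.

Lemma inv_det1 X : M2det X = mkC 1 0 ->
  M2inv X = mkM2 (e22 X) (Copp (e12 X)) (Copp (e21 X)) (e11 X).
Proof. intros H. unfold M2inv. rewrite H. destruct X as [[x1 y1] [x2 y2] [x3 y3] [x4 y4]].
  unfold Cinv, Cmul, Copp; cbn [Re Im e11 e12 e21 e22]. f_equal; f_equal; field. Qed.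

Lemma Qinv_eq psiA eta phi :
  M2inv (QA1 psiA eta phi) = Qi (cos (psiA/2)) (sin (psiA/2)) (cosh eta) (sinh eta) (cos phi) (sin phi).
Proof.
  assert (Hh : cosh eta ^2 - sinh eta ^2 = 1).
  { unfold cosh, sinh. rewrite exp_Ropp. field. apply Rgt_not_eq, exp_pos. }
  assert (Hf : cos phi ^2 + sin phi ^2 = 1).
  { pose proof (sin2_cos2 phi). unfold Rsqr in *. lra. }
  assert (Hs : cos (psiA/2) ^2 + sin (psiA/2) ^2 = 1).
  { pose proof (sin2_cos2 (psiA/2)). unfold Rsqr in *. lra. }
  rewrite inv_det1.
  - rewrite QA1_eq. cbn zeta. unfold Qi, Copp; cbn [Re Im e11 e12 e21 e22].
    f_equal; f_equal; ring.
  - rewrite QA1_eq. cbn zeta. unfold M2det, Csub, Cadd, Copp, Cmul; cbn [Re Im e11 e12 e21 e22].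
    f_equal.
    + transitivity (cos (psiA/2) ^2 + sin (psiA/2) ^2 * ((cosh eta ^2 - sinh eta ^2) * (cos phi ^2 + sin phi ^2))).
      ring. rewrite Hh, Hf, Rmult_1_l, Rmult_1_r. exact Hs.
    + ring.
Qed.

Lemma Mint_eq a b c mu chi : Mint a b c mu chi = Mi a b c (exp mu) (cos chi) (sin chi).
Proof. unfold Mint, Mi, Cmul, Copp, Cexp, RtoC; cbn.
  rewrite exp_0, cos_neg, sin_neg, exp_Ropp. f_equal; f_equal; ring. Qed.

Lemma Cdiv_lemma (z u : Defs.C) (r : R) : u <> RtoC 0 -> Re z = - r * Re u -> Im z = - r * Im u ->
  Copp (Cdiv z u) = RtoC r.
Proof. destruct z as [x y], u as [x' y']; cbn [Re Im]; intros Hu H1 H2.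
  assert (x'^2+y'^2 <> 0).
  { intro H0. apply Hu. assert (x'=0) by nra. assert (y'=0) by nra. subst; reflexivity. }
  unfold Cdiv, Cmul, Cinv, Copp, RtoC; cbn [Re Im]; subst; f_equal; field; auto. Qed.

Theorem mainTheorem8 (psiA eta phi a b c mu chi : R) :
  0 < psiA < 2 * PI -> psiA <> PI -> eta <> 0 -> 0 < phi < PI -> c <> 0 ->
  let A := tan (psiA / 2) in
  let h := sinh eta / sin phi in
  let m := tanh mu in
  let P := M2mul (M2inv (QA1 psiA eta phi)) (Mint a b c mu chi) in
  Cconj (e11 P) = e22 P ->
  Cconj (e21 P) <> RtoC 0 ->
  (A - h) * m - h * (h * A + 1) <> 0 ->
  Copp (Cdiv (e12 P) (Cconj (e21 P)))
    = RtoC (((A + h) * m + h * (h * A - 1)) / ((A - h) * m - h * (h * A + 1)))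
  /\ (forall mu' : R,
        Copp (Cdiv (e12 P) (Cconj (e21 P))) = RtoC (exp (2 * mu')) ->
        let m' := tanh mu' in
        m * m' - h / A * (m + m') - h ^ 2 = 0).
Proof.
  intros [Hp1 Hp2] HpPI Heta [Hf1 Hf2] Hc A h m P Hcj Hnz HD.
  pose proof PI_RGT_0 as HPI.
  assert (Hsn : sin (psiA/2) > 0) by (apply sin_gt_0; lra).
  assert (Hcs : cos (psiA/2) <> 0).
  { destruct (Rtotal_order (psiA/2) (PI/2)) as [Hl|[He|Hg]].
    - apply Rgt_not_eq, cos_gt_0; lra.
    - exfalso. apply HpPI. lra.
    - apply Rlt_not_eq, cos_lt_0; lra. }
  assert (Hsf : sin phi > 0) by (apply sin_gt_0; lra).
  assert (Hsh : sinh eta <> 0).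
  { unfold sinh. intro H0. apply Heta.
    assert (exp eta = exp (- eta)) by lra. apply exp_inv in H. lra. }
  assert (Hh : cosh eta ^2 - sinh eta ^2 = 1).
  { unfold cosh, sinh. rewrite exp_Ropp. field. apply Rgt_not_eq, exp_pos. }
  assert (Hf : cos phi ^2 + sin phi ^2 = 1).
  { pose proof (sin2_cos2 phi). unfold Rsqr in *. lra. }
  pose proof (exp_pos mu) as Hem.
  assert (Hcm : (exp mu + / exp mu)/2 <> 0).
  { pose proof (Rinv_0_lt_compat _ Hem). lra. }
  assert (HA : A = sin (psiA/2) / cos (psiA/2)) by reflexivity.
  assert (Hhh : h = sinh eta / sin phi) by reflexivity.
  assert (Hm : m = ((exp mu - / exp mu)/2) / ((exp mu + / exp mu)/2)).
  { unfold m, tanh, sinh, cosh. rewrite exp_Ropp. reflexivity. }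
  assert (HP : P = M2mul (Qi (cos (psiA/2)) (sin (psiA/2)) (cosh eta) (sinh eta) (cos phi) (sin phi))
                         (Mi a b c (exp mu) (cos chi) (sin chi))).
  { unfold P. rewrite Qinv_eq, Mint_eq. reflexivity. }
  clearbody A h m P. subst P.
  pose proof (core (cos (psiA/2)) (sin (psiA/2)) (cosh eta) (sinh eta) (cos phi) (sin phi)
                a b c (exp mu) (cos chi) (sin chi)) as Hcore.
  cbv zeta in Hcore.
  rewrite <- HA, <- Hhh, <- Hm in Hcore.
  destruct Hcore as [E1 [E2 [E3 E4]]]; auto; try lra.
  assert (Hfirst : Copp (Cdiv (e12 (M2mul (Qi (cos (psiA / 2)) (sin (psiA / 2)) (cosh eta) (sinh eta) (cos phi) (sin phi))
     (Mi a b c (exp mu) (cos chi) (sin chi))))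
  (Cconj (e21 (M2mul (Qi (cos (psiA / 2)) (sin (psiA / 2)) (cosh eta) (sinh eta) (cos phi) (sin phi))
        (Mi a b c (exp mu) (cos chi) (sin chi)))))) =
   RtoC (((A + h) * m + h * (h * A - 1)) / ((A - h) * m - h * (h * A + 1)))).
  { apply Cdiv_lemma; auto.
    - rewrite E1, E3. field. repeat split; auto; lra.
    - rewrite E2, E4. field. repeat split; auto; lra. }
  split; [exact Hfirst|].
  intros mu' Hmu' m'.
  rewrite Hfirst in Hmu'. apply (f_equal Re) in Hmu'. cbn in Hmu'.
  assert (HAnz : A <> 0).
  { rewrite HA. unfold Rdiv. apply Rmult_integral_contrapositive; split; [lra|].
    apply Rinv_neq_0_compat; auto. }
  pose proof (exp_pos mu') as Hx.
  assert (Hx2 : exp (2*mu') = exp mu' * exp mu').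
  { rewrite <- exp_plus. f_equal. ring. }
  rewrite Hx2 in Hmu'.
  assert (HN : (A + h) * m + h * (h * A - 1) = exp mu' * exp mu' * ((A - h) * m - h * (h * A + 1))).
  { rewrite <- Hmu'. field. repeat split; auto; lra. }
  unfold m', tanh, sinh, cosh. rewrite exp_Ropp.
  set (x := exp mu') in *.
  transitivity (- ((A + h) * m + h * (h * A - 1) - x*x*((A - h) * m - h * (h * A + 1))) / (A*(x*x+1))).
  - field. repeat split; auto; try lra; nra.
  - rewrite HN. field. split; auto; nra.
Qed.
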